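(* Let $\tau\in(0,1]$ and let $p_1,p_2$ be distributions on a common countable domain (each extended by infinitely many zero-probability elements) satisfying $R_\tau(p_1,p_2)\le\epsilon$. Then there exists a bijection (relabeling) $\pi$ of the domain such that $$\sum_i\big|\max(p_1(i),\tau)-\max(p_2(\pi(i)),\tau)\big|\le 2\epsilon.$$
   Context: The histogram of a distribution $p$ is the map $h_p:(0,1]\to\mathbb{N}\cup\{0\}$, $h_p(x)=|\{a:p(a)=x\}|$; its probability mass at $x$ is $x h_p(x)$. For $\tau\in[0,1]$, $R_\tau(p_1,p_2)=R_\tau(h_{p_1},h_{p_2})$ is the $\tau$-truncated relative earthmover distance: the minimum, over all schemes moving the probability mass of $h_{p_1}$ to yield that of $h_{p_2}$, of the total cost, where moving one unit of mass from probability $x$ to probability $y$ costs $|\log\max(x,\tau)-\log\max(y,\tau)|$. *)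

(* Defs.v *)
From Stdlib Require Import Reals List FinFun.
Open Scope R_scope.

Definition distribution (p : nat -> R) : Prop :=
  (forall a, 0 <= p a) /\ infinite_sum p 1.

Definition inf_many_zeros (p : nat -> R) : Prop :=
  forall N : nat, exists a : nat, (N <= a)%nat /\ p a = 0.

(* histogram: hist p x n  <->  h_p(x) = n, i.e. |{a : p a = x}| = n *)
Definition hist (p : nat -> R) (x : R) (n : nat) : Prop :=
  exists l : list nat, NoDup l /\ length l = n /\ (forall a, In a l <-> p a = x).

Definition move_cost (tau x y : R) : R :=
  Rabs (ln (Rmax x tau) - ln (Rmax y tau)).

(* A transport scheme is a countable family of moves: move k transports
   mass w k >= 0 from probability sx k to probability sy k (both in (0,1]).
   It moves the mass of h_{p1} to yield that of h_{p2} when, for every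
   x in (0,1], the total mass moved out of x equals x * h_{p1}(x) and the
   total mass moved into x equals x * h_{p2}(x). *)
Definition scheme_ok (p1 p2 : nat -> R) (sx sy w : nat -> R) : Prop :=
  (forall k, 0 <= w k /\ 0 < sx k <= 1 /\ 0 < sy k <= 1) /\
  (forall x n, 0 < x <= 1 -> hist p1 x n ->
     infinite_sum (fun k => if Req_EM_T (sx k) x then w k else 0) (x * INR n)) /\
  (forall y n, 0 < y <= 1 -> hist p2 y n ->
     infinite_sum (fun k => if Req_EM_T (sy k) y then w k else 0) (y * INR n)).

Definition scheme_cost (tau : R) (sx sy w : nat -> R) (c : R) : Prop :=
  infinite_sum (fun k => w k * move_cost tau (sx k) (sy k)) c.

(* R_tau(p1,p2) <= eps : the minimum (infimum) over schemes of the cost is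
   at most eps. *)
Definition R_tau_le (tau : R) (p1 p2 : nat -> R) (eps : R) : Prop :=
  forall delta, 0 < delta ->
    exists sx sy w c, scheme_ok p1 p2 sx sy w /\ scheme_cost tau sx sy w c /\
                      c <= eps + delta.

(* Main.v *)
Require Import Defs.
From Stdlib Require Import Reals FinFun Lra Lia List Classical Arith.
Open Scope R_scope.

Ltac absr := unfold Rabs in *; repeat match goal with
  | |- context [Rcase_abs ?x] => destruct (Rcase_abs x)
  | H : context [Rcase_abs ?x] |- _ => destruct (Rcase_abs x)
  end; lra.

Fixpoint sumN (N:nat) (f:nat->R) : R :=
  match N with O => 0 | S n => sumN n f + f n end.

Lemma sumN_ext N f g : (forall i, (i < N)%nat -> f i = g i) -> sumN N f = sumN N g.
Proof. induction N; simpl; intros H; auto. rewrite IHN by (intros; apply H; lia). rewrite H by lia; auto. Qed.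

Lemma sumN_plus N f g : sumN N (fun i => f i + g i) = sumN N f + sumN N g.
Proof. induction N; simpl; [lra|rewrite IHN; lra]. Qed.

Lemma sumN_minus N f g : sumN N (fun i => f i - g i) = sumN N f - sumN N g.
Proof. induction N; simpl; [lra|rewrite IHN; lra]. Qed.

Lemma sumN_scal N c f : sumN N (fun i => c * f i) = c * sumN N f.
Proof. induction N; simpl; [lra|rewrite IHN; lra]. Qed.

Lemma sumN_le N f g : (forall i, (i < N)%nat -> f i <= g i) -> sumN N f <= sumN N g.
Proof. induction N; simpl; intros H; [lra|]. assert (f N <= g N) by (apply H; lia).
  assert (sumN N f <= sumN N g) by (apply IHN; intros; apply H; lia). lra. Qed.

Lemma sumN_zero N f : (forall i, (i < N)%nat -> f i = 0) -> sumN N f = 0.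
Proof. induction N; simpl; intros H; [lra|]. rewrite IHN, H by (try intros; try apply H; lia). lra. Qed.

Lemma ln_le' a b : 0 < a -> a <= b -> ln a <= ln b.
Proof. intros Ha Hab. destruct (Req_dec a b) as [->|Hne]; [lra|].
  left; apply ln_increasing; lra. Qed.

Lemma ln_bound f f' : 0 < f -> f < f' -> (f' - f) / f' <= ln f' - ln f.
Proof. intros Hf Hff.
  assert (H := exp_ineq1_le (ln (f / f'))).
  rewrite exp_ln in H by (apply Rdiv_lt_0_compat; lra).
  unfold Rdiv in H. rewrite ln_mult in H by (try apply Rinv_0_lt_compat; lra).
  rewrite ln_Rinv in H by lra.
  assert ((f' - f) / f' = 1 - f * / f') by (field; lra). lra. Qed.

Lemma key_ineq f f' D S' E L : 0 < f -> f < f' -> E = f' * D + S' ->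
  (f' - f) / f' <= L ->
  (f' - f) * Rabs D + Rabs (S' + (f' - f) * D) <= Rabs S' + 2 * L * Rabs E.
Proof. intros Hf Hff HE HL.
  set (r := (f' - f) / f').
  assert (Hr0 : 0 < r) by (apply Rdiv_lt_0_compat; lra).
  assert (Hr1 : r < 1). { unfold r. apply (Rmult_lt_reg_r f'); [lra|].
     unfold Rdiv; rewrite Rmult_assoc, Rinv_l by lra. lra. }
  assert (HD : (f' - f) * D = r * (E - S')). { unfold r. rewrite HE. field. lra. }
  rewrite <- (Rabs_pos_eq (f'-f)) at 1 by lra. rewrite <- Rabs_mult, HD.
  replace (S' + r * (E - S')) with ((1 - r) * S' + r * E) by ring.
  assert (Rabs (r * (E - S')) <= r * Rabs E + r * Rabs S').
  { rewrite Rabs_mult, Rabs_pos_eq by lra.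
    assert (Rabs (E - S') <= Rabs E + Rabs S') by (unfold Rminus; rewrite <- (Rabs_Ropp S'); apply Rabs_triang). nra. }
  assert (Rabs ((1 - r) * S' + r * E) <= (1 - r) * Rabs S' + r * Rabs E).
  { eapply Rle_trans; [apply Rabs_triang|].
    rewrite !Rabs_mult, !(Rabs_pos_eq r), (Rabs_pos_eq (1-r)) by lra. lra. }
  assert (r * Rabs E <= L * Rabs E) by (apply Rmult_le_compat_r; [apply Rabs_pos|exact HL]).
  lra. Qed.

Lemma list_next (l : list R) f : (exists x, In x l /\ f < x) ->
  exists m, In m l /\ f < m /\ forall x, In x l -> f < x -> m <= x.
Proof.
  induction l as [|a l IH]; intros [x [Hx Hfx]]; [destruct Hx|].
  destruct (classic (exists y, In y l /\ f < y)) as [Hy|Hy].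
  - destruct (IH Hy) as [m [Hm1 [Hm2 Hm3]]].
    destruct (Rlt_dec f a) as [Ha|Ha].
    + destruct (Rle_dec a m).
      * exists a; split; [left; auto|split; auto]. intros y [<-|Hy'] Hfy; [lra|].
        specialize (Hm3 y Hy' Hfy); lra.
      * exists m; split; [right; auto|split; auto]. intros y [<-|Hy'] Hfy; [lra|auto].
    + exists m; split; [right; auto|split; auto]. intros y [<-|Hy'] Hfy; [lra|auto].
  - destruct Hx as [->|Hx]; [|exfalso; apply Hy; eauto].
    exists x; split; [left; auto|split; auto]. intros y [<-|Hy'] Hfy; [lra|].
    exfalso; apply Hy; eauto.
Qed.

Section Core.
Variables (N : nat) (u v : nat -> R).
Hypothesis mono : forall i j, (i < N)%nat -> (j < N)%nat -> u i < u j -> v i <= v j.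

Fixpoint cntN (n : nat) (f : R) : nat :=
  match n with O => O | S m => (cntN m f + (if Rlt_dec f (u m) then 1 else 0)
                                  + (if Rlt_dec f (v m) then 1 else 0))%nat end.

Lemma cnt_mono n f f' : f <= f' -> (cntN n f' <= cntN n f)%nat.
Proof. intros H. induction n; simpl; [lia|].
  destruct (Rlt_dec f' (u n)), (Rlt_dec f (u n)), (Rlt_dec f' (v n)), (Rlt_dec f (v n));
  try lra; lia. Qed.

Lemma cnt_strict n f f' : f < f' -> (exists i, (i < n)%nat /\ (u i = f' \/ v i = f')) ->
  (cntN n f' < cntN n f)%nat.
Proof. intros H [i [Hi Hu]]. induction n; [lia|]. simpl.
  assert (Hm := cnt_mono n f f' (Rlt_le _ _ H)).
  destruct (Nat.eq_dec i n) as [->|Hne].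
  - destruct (Rlt_dec f' (u n)), (Rlt_dec f (u n)), (Rlt_dec f' (v n)), (Rlt_dec f (v n));
    destruct Hu; try lra; lia.
  - assert (cntN n f' < cntN n f)%nat by (apply IHn; lia).
    destruct (Rlt_dec f' (u n)), (Rlt_dec f (u n)), (Rlt_dec f' (v n)), (Rlt_dec f (v n));
    try lra; lia. Qed.

Lemma cnt_zero n f : cntN n f = O -> forall i, (i < n)%nat -> u i <= f /\ v i <= f.
Proof. induction n; simpl; intros H i Hi; [lia|].
  destruct (Rlt_dec f (u n)), (Rlt_dec f (v n)); try lia.
  rewrite !Nat.add_0_r in H. destruct (Nat.eq_dec i n) as [->|]; [lra|apply IHn; auto; lia]. Qed.

Lemma cnt_pos n f : cntN n f <> O -> exists i, (i < n)%nat /\ (f < u i \/ f < v i).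
Proof. induction n; simpl; intros H; [lia|].
  destruct (Rlt_dec f (u n)); [exists n; split; auto; lia|].
  destruct (Rlt_dec f (v n)); [exists n; split; auto; lia|].
  destruct IHn as [i [Hi Hh]]; [lia|]. exists i; split; auto; lia. Qed.

Definition Cf f := sumN N (fun i => Rabs (Rmax (u i) f - Rmax (v i) f)).
Definition Sf f := sumN N (fun i => Rmax (u i) f - Rmax (v i) f).
Definition FF G f := sumN N (fun i => Rmax (u i) f * G (Rmax (u i) f) - Rmax (v i) f * G (Rmax (v i) f)).
Definition Lip G f := forall x y, f <= x -> f <= y -> Rabs (G x - G y) <= Rabs (ln x - ln y).

Lemma next_level f : cntN N f <> O -> exists f', f < f' /\
   (exists i, (i < N)%nat /\ (u i = f' \/ v i = f')) /\
   forall i, (i < N)%nat -> (u i <= f \/ f' <= u i) /\ (v i <= f \/ f' <= v i).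
Proof. intros H. destruct (cnt_pos N f H) as [i [Hi Hh]].
  set (l := map u (seq 0 N) ++ map v (seq 0 N)).
  assert (Hin : forall j, (j < N)%nat -> In (u j) l /\ In (v j) l).
  { intros j Hj; unfold l; split; apply in_or_app; [left|right]; apply in_map; apply in_seq; lia. }
  destruct (list_next l f) as [m [Hm1 [Hm2 Hm3]]].
  { destruct Hh; [exists (u i)|exists (v i)]; split; auto; apply Hin; auto. }
  exists m; split; auto; split.
  - unfold l in Hm1; apply in_app_or in Hm1; destruct Hm1 as [Hm1|Hm1];
    apply in_map_iff in Hm1; destruct Hm1 as [j [Hj1 Hj2]]; apply in_seq in Hj2;
    exists j; split; auto; lia.
  - intros j Hj; destruct (Hin j Hj) as [H1 H2]; split.
    + destruct (Rle_dec (u j) f); [left; auto|right; apply Hm3; auto; lra].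
    + destruct (Rle_dec (v j) f); [left; auto|right; apply Hm3; auto; lra].
Qed.


Lemma base_case f : cntN N f = O -> exists G, G f = 0 /\ Lip G f /\ Cf f + Rabs (Sf f) <= 2 * FF G f.
Proof. intros H0. exists (fun _ => 0). split; [auto|split].
  - intros x y _ _. rewrite Rminus_0_r, Rabs_R0. apply Rabs_pos.
  - assert (Hm : forall i, (i < N)%nat -> Rmax (u i) f = f /\ Rmax (v i) f = f).
    { intros i Hi; destruct (cnt_zero N f H0 i Hi); split; apply Rmax_right; auto. }
    unfold Cf, Sf, FF. rewrite !sumN_zero; [rewrite Rabs_R0; lra| | |];
    intros i Hi; destruct (Hm i Hi) as [-> ->]; try rewrite Rminus_diag; try rewrite Rabs_R0; ring.
Qed.

Ltac mxcase := unfold Rmax, Rmin in *; repeat match goal with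
  | |- context [Rle_dec ?a ?b] => destruct (Rle_dec a b)
  | H : context [Rle_dec ?a ?b] |- _ => destruct (Rle_dec a b)
  end.

Lemma term_abs f f' a b : f < f' -> (a <= f \/ f' <= a) -> (b <= f \/ f' <= b) ->
  Rabs (Rmax a f - Rmax b f) = Rabs (Rmax a f' - Rmax b f') +
     (f' - f) * Rabs ((if Rle_dec f' a then 1 else 0) - (if Rle_dec f' b then 1 else 0)).
Proof. intros H Ha Hb. destruct Ha, Hb; mxcase; absr. Qed.

Lemma term_S f f' a b : f < f' -> (a <= f \/ f' <= a) -> (b <= f \/ f' <= b) ->
  Rmax a f - Rmax b f = (Rmax a f' - Rmax b f') +
     (f' - f) * ((if Rle_dec f' a then 1 else 0) - (if Rle_dec f' b then 1 else 0)).
Proof. intros H Ha Hb. destruct Ha, Hb; mxcase; lra. Qed.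

Lemma term_E f f' a b : f < f' -> (a <= f \/ f' <= a) -> (b <= f \/ f' <= b) ->
  (if Rle_dec f' a then a else 0) - (if Rle_dec f' b then b else 0) =
  f' * ((if Rle_dec f' a then 1 else 0) - (if Rle_dec f' b then 1 else 0)) + (Rmax a f' - Rmax b f').
Proof. intros H Ha Hb. destruct Ha, Hb; mxcase; lra. Qed.

Lemma term_F f f' a s G' : 0 < f -> f < f' -> G' f' = 0 -> (a <= f \/ f' <= a) ->
  Rmax a f * (s * (ln (Rmin (Rmax a f) f') - ln f) + G' (Rmax (Rmax a f) f')) =
  Rmax a f' * G' (Rmax a f') + s * (ln f' - ln f) * (if Rle_dec f' a then a else 0).
Proof. intros Hf H HG Ha. destruct Ha.
  - rewrite (Rmax_right a f) by lra. rewrite (Rmin_left f f') by lra.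
    rewrite (Rmax_right f f') by lra. rewrite (Rmax_right a f') by lra.
    destruct (Rle_dec f' a); [lra|]. rewrite HG. ring.
  - rewrite (Rmax_left a f) by lra. rewrite (Rmin_right a f') by lra.
    rewrite (Rmax_left a f') by lra.
    destruct (Rle_dec f' a); [|lra]. ring.
Qed.

Lemma lip_step f f' s G' : 0 < f -> f < f' -> (s = 1 \/ s = -1) -> Lip G' f' ->
  Lip (fun x => s * (ln (Rmin x f') - ln f) + G' (Rmax x f')) f.
Proof. intros Hf H Hs HL x y Hx Hy.
  assert (H1 : Rabs (G' (Rmax x f') - G' (Rmax y f')) <= Rabs (ln (Rmax x f') - ln (Rmax y f'))).
  { apply HL; [apply Rmax_r|apply Rmax_r]. }
  replace (s * (ln (Rmin x f') - ln f) + G' (Rmax x f') - (s * (ln (Rmin y f') - ln f) + G' (Rmax y f')))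
    with (s * (ln (Rmin x f') - ln (Rmin y f')) + (G' (Rmax x f') - G' (Rmax y f'))) by ring.
  eapply Rle_trans; [apply Rabs_triang|]. rewrite Rabs_mult.
  assert (Rabs s = 1) by (destruct Hs as [->| ->]; absr).
  rewrite H0, Rmult_1_l.
  destruct (Rle_dec x f'), (Rle_dec y f').
  - rewrite (Rmin_left x), (Rmin_left y), (Rmax_right x), (Rmax_right y) in * by lra.
    rewrite Rminus_diag, Rabs_R0 in *. lra.
  - rewrite (Rmin_left x), (Rmin_right y), (Rmax_right x), (Rmax_left y) in * by lra.
    assert (ln x <= ln f') by (apply ln_le'; lra). assert (ln f' <= ln y) by (apply ln_le'; lra).
    absr.
  - rewrite (Rmin_right x), (Rmin_left y), (Rmax_left x), (Rmax_right y) in * by lra.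
    assert (ln y <= ln f') by (apply ln_le'; lra). assert (ln f' <= ln x) by (apply ln_le'; lra).
    absr.
  - rewrite (Rmin_right x), (Rmin_right y), (Rmax_left x), (Rmax_left y) in * by lra.
    rewrite Rminus_diag, Rabs_R0 in *. lra.
Qed.

Theorem core_level n : forall f, 0 < f -> (cntN N f <= n)%nat ->
  exists G, G f = 0 /\ Lip G f /\ Cf f + Rabs (Sf f) <= 2 * FF G f.
Proof.
  induction n as [|n IH]; intros f Hf Hc.
  { apply base_case; lia. }
  destruct (Nat.eq_dec (cntN N f) O) as [H0|H0]; [apply base_case; auto|].
  destruct (next_level f H0) as [f' [Hff [Hex Hdich]]].
  assert (Hc' : (cntN N f' <= n)%nat) by (assert (Hs := cnt_strict N f f' Hff Hex); lia).
  destruct (IH f' ltac:(lra) Hc') as [G' [HG0 [HL HI]]].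
  set (da := fun a => if Rle_dec f' a then 1 else 0).
  set (ea := fun a => if Rle_dec f' a then a else 0).
  set (D := sumN N (fun i => da (u i) - da (v i))).
  set (E := sumN N (fun i => ea (u i) - ea (v i))).
  set (s := if Rle_dec 0 E then 1 else -1).
  set (L := ln f' - ln f).
  exists (fun x => s * (ln (Rmin x f') - ln f) + G' (Rmax x f')).
  split; [|split].
  - rewrite Rmin_left, Rmax_right by lra. rewrite HG0. ring.
  - apply lip_step; auto. unfold s; destruct (Rle_dec 0 E); auto.
  - assert (HF : FF (fun x => s * (ln (Rmin x f') - ln f) + G' (Rmax x f')) f = FF G' f' + s * L * E).
    { unfold FF, E. rewrite <- sumN_scal, <- sumN_plus. apply sumN_ext; intros i Hi.
      destruct (Hdich i Hi) as [Hu Hv].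
      rewrite (term_F f f' (u i) s G'), (term_F f f' (v i) s G') by auto.
      unfold L, ea. ring. }
    assert (HS : Sf f = Sf f' + (f' - f) * D).
    { unfold Sf, D. rewrite <- sumN_scal, <- sumN_plus. apply sumN_ext; intros i Hi.
      destruct (Hdich i Hi) as [Hu Hv]. unfold da; apply term_S; auto. }
    assert (HE : E = f' * D + Sf f').
    { unfold E, D, Sf. rewrite <- sumN_scal, <- sumN_plus. apply sumN_ext; intros i Hi.
      destruct (Hdich i Hi) as [Hu Hv]. unfold da, ea; apply (term_E f); auto. }
    assert (HC1 : Cf f = Cf f' + (f' - f) * sumN N (fun i => Rabs (da (u i) - da (v i)))).
    { unfold Cf. rewrite <- sumN_scal, <- sumN_plus. apply sumN_ext; intros i Hi.
      destruct (Hdich i Hi) as [Hu Hv]. unfold da; apply term_abs; auto. }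
    assert (HD : sumN N (fun i => Rabs (da (u i) - da (v i))) = Rabs D).
    { destruct (classic (exists i, (i < N)%nat /\ f' <= u i /\ u i <> v i /\ f' > v i)) as [[i [Hi [H1 [_ H2]]]]|Hno].
      - assert (HB : forall j, (j < N)%nat -> f' <= v j -> f' <= u j).
        { intros j Hj Hvj. destruct (Rle_dec f' (u j)); auto. exfalso.
          destruct (Hdich i Hi) as [_ [Hvi|Hvi]]; [|lra].
          destruct (Hdich j Hj) as [[Huj|Huj] _]; [|lra].
          assert (v j <= v i) by (apply mono; auto; lra). lra. }
        assert (Heq : sumN N (fun i => Rabs (da (u i) - da (v i))) = D).
        { unfold D; apply sumN_ext; intros j Hj. specialize (HB j Hj).
          unfold da; destruct (Rle_dec f' (u j)), (Rle_dec f' (v j)); try absr. }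
        assert (0 <= sumN N (fun i => Rabs (da (u i) - da (v i)))).
        { rewrite <- (sumN_zero N (fun _ => 0)) by auto; apply sumN_le; intros; apply Rabs_pos. }
        rewrite Heq in *. rewrite Rabs_pos_eq; auto.
      - assert (HB : forall j, (j < N)%nat -> f' <= u j -> f' <= v j).
        { intros j Hj Huj. destruct (Rle_dec f' (v j)); auto. exfalso. apply Hno.
          exists j; split; auto; split; auto; split; lra. }
        assert (Heq : sumN N (fun i => Rabs (da (u i) - da (v i))) = sumN N (fun i => da (v i) - da (u i))).
        { apply sumN_ext; intros j Hj. specialize (HB j Hj).
          unfold da; destruct (Rle_dec f' (u j)), (Rle_dec f' (v j)); try absr. }
        assert (0 <= sumN N (fun i => Rabs (da (u i) - da (v i)))).
        { rewrite <- (sumN_zero N (fun _ => 0)) by auto; apply sumN_le; intros; apply Rabs_pos. }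
        rewrite Heq in *. unfold D. rewrite (sumN_minus N (fun i => da (u i))). rewrite (sumN_minus N (fun i => da (v i))) in *. absr. }
    rewrite HF, HC1, HD, HS.
    assert (HLb := ln_bound f f' Hf Hff).
    assert (Hk := key_ineq f f' D (Sf f') E L Hf Hff HE HLb).
    assert (s * L * E = L * Rabs E).
    { unfold s. destruct (Rle_dec 0 E); [rewrite Rabs_pos_eq by lra|rewrite Rabs_left by lra]; ring. }
    lra.
Qed.

End Core.

Definition permN (N : nat) (s : nat -> nat) :=
  (exists si, (forall x, si (s x) = x) /\ (forall y, s (si y) = y)) /\ (forall i, (N <= i)%nat -> s i = i).

Lemma permN_range N s : permN N s -> forall i, (i < N)%nat -> (s i < N)%nat.
Proof. intros [[si [H1 H2]] H3] i Hi. destruct (Nat.lt_ge_cases (s i) N) as [|Hge]; auto.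
  assert (s (s i) = s i) by (apply H3; auto).
  assert (si (s (s i)) = si (s i)) by congruence. rewrite !H1 in H0. lia. Qed.

Definition sw (a b i : nat) : nat := if Nat.eqb i a then b else if Nat.eqb i b then a else i.

Lemma sw_inv a b i : sw a b (sw a b i) = i.
Proof. unfold sw. destruct (Nat.eqb_spec i a); [|destruct (Nat.eqb_spec i b)];
  repeat match goal with |- context [Nat.eqb ?x ?y] =>
    match x with context [Nat.eqb _ _] => fail 1 | _ => destruct (Nat.eqb_spec x y) end end; lia. Qed.

Lemma sw_N a N : sw a N N = a.
Proof. unfold sw. destruct (Nat.eqb_spec N a); [lia|now rewrite Nat.eqb_refl]. Qed.

Lemma sw_le a N i : (a <= N)%nat -> (i <= N)%nat -> (sw a N i <= N)%nat.
Proof. unfold sw; intros; destruct (Nat.eqb_spec i a), (Nat.eqb_spec i N); lia. Qed.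

Lemma sw_big a N i : (a <= N)%nat -> (N < i)%nat -> sw a N i = i.
Proof. unfold sw; intros; destruct (Nat.eqb_spec i a), (Nat.eqb_spec i N); lia. Qed.

Lemma sumN_replace N a x phi : (a < N)%nat ->
  sumN N (fun i => if Nat.eqb i a then x else phi i) = sumN N phi - phi a + x.
Proof. induction N; intros Ha; [lia|]. simpl.
  destruct (Nat.eqb_spec N a) as [->|Hne].
  - rewrite (sumN_ext a _ phi). ring. intros i Hi. destruct (Nat.eqb_spec i a); [lia|auto].
  - rewrite IHN by lia. ring. Qed.

Lemma sumN_sw N a phi : (a <= N)%nat -> sumN (S N) (fun i => phi (sw a N i)) = sumN (S N) phi.
Proof. intros Ha. destruct (Nat.eq_dec a N) as [->|Hne].
  - apply sumN_ext; intros i _; unfold sw; destruct (Nat.eqb_spec i N); subst; auto.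
  - simpl. replace (sw a N N) with a by (unfold sw; destruct (Nat.eqb_spec N a); [lia|now rewrite Nat.eqb_refl]).
    rewrite (sumN_ext N _ (fun i => if Nat.eqb i a then phi N else phi i)).
    + rewrite sumN_replace by lia. ring.
    + intros i Hi; unfold sw; destruct (Nat.eqb_spec i a), (Nat.eqb_spec i N); auto; lia.
Qed.

Lemma argmax N (u : nat -> R) : exists a, (a <= N)%nat /\ forall i, (i <= N)%nat -> u i <= u a.
Proof. induction N.
  - exists O; split; auto; intros i Hi; replace i with O by lia; lra.
  - destruct IHN as [a [Ha H]]. destruct (Rle_dec (u a) (u (S N))).
    + exists (S N); split; auto. intros i Hi; destruct (Nat.eq_dec i (S N)) as [->|]; [lra|].
      specialize (H i ltac:(lia)); lra.
    + exists a; split; [lia|]. intros i Hi; destruct (Nat.eq_dec i (S N)) as [->|]; [lra|].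
      apply H; lia.
Qed.

Lemma sort_perm N : forall (u v : nat -> R), exists s, permN N s /\
  (forall i j, (i < N)%nat -> (j < N)%nat -> u i < u j -> v (s i) <= v (s j)) /\
  (forall phi, sumN N (fun i => phi (s i)) = sumN N phi).
Proof.
  induction N as [|N IH]; intros u v.
  - exists (fun i => i). split; [split; [exists (fun i => i); auto|auto]|split; [intros; lia|auto]].
  - destruct (argmax N u) as [a [Ha Hua]]. destruct (argmax N v) as [b [Hb Hvb]].
    destruct (IH (fun i => u (sw a N i)) (fun i => v (sw b N i))) as [s [Hp [Hm Hs]]].
    assert (HsN : s N = N) by (apply (proj2 Hp); auto).
    assert (Hr := permN_range N s Hp).
    assert (Hr' : forall i, (i <= N)%nat -> (s i <= N)%nat).
    { intros i Hi; destruct (Nat.eq_dec i N) as [->|]; [lia|]. specialize (Hr i ltac:(lia)); lia. }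
    exists (fun i => sw b N (s (sw a N i))). split; [|split].
    + destruct Hp as [[si [H1 H2]] H3]. split.
      * exists (fun y => sw a N (si (sw b N y))). split; intros; rewrite ?sw_inv, ?H1, ?H2, ?sw_inv; auto.
      * intros i Hi. rewrite (sw_big a N i), H3, sw_big; auto; lia.
    + intros i j Hi Hj Huij.
      set (i' := sw a N i). set (j' := sw a N j).
      assert (Hi' : (i' <= N)%nat) by (apply sw_le; lia).
      assert (Hj' : (j' <= N)%nat) by (apply sw_le; lia).
      assert (Ei : u i = u (sw a N i')) by (unfold i'; rewrite sw_inv; auto).
      assert (Ej : u j = u (sw a N j')) by (unfold j'; rewrite sw_inv; auto).
      fold i' j'.
      destruct (Nat.eq_dec i' N) as [Ei'|Ei'].
      { exfalso. rewrite Ei', sw_N in Ei.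
        assert (u (sw a N j') <= u a) by (apply Hua; apply sw_le; lia). lra. }
      destruct (Nat.eq_dec j' N) as [Ej'|Ej'].
      { rewrite Ej', HsN, sw_N. apply Hvb. apply sw_le; auto. }
      apply (Hm i' j'); try lia. cbv beta. rewrite <- Ei, <- Ej. auto.
    + intros phi.
      rewrite (sumN_sw N a (fun k => phi (sw b N (s k)))) by auto.
      simpl. rewrite (Hs (fun k => phi (sw b N k))), HsN.
      change (sumN N (fun k => phi (sw b N k)) + phi (sw b N N)) with (sumN (S N) (fun k => phi (sw b N k))).
      apply sumN_sw; auto.
Qed.

Lemma sum_ge_term f k n : (forall i, 0 <= f i) -> (k <= n)%nat -> f k <= sum_f_R0 f n.
Proof. intros Hf Hk. induction n.
  - replace k with O by lia. simpl; lra.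
  - destruct (Nat.eq_dec k (S n)) as [->|Hne].
    + simpl. assert (0 <= sum_f_R0 f n) by (apply cond_pos_sum; auto). lra.
    + simpl. assert (f k <= sum_f_R0 f n) by (apply IHn; lia). specialize (Hf (S n)). lra.
Qed.

Lemma isum_zero_pos f k : (forall i, 0 <= f i) -> infinite_sum f 0 -> 0 < f k -> False.
Proof. intros Hf Hs Hk. destruct (Hs (f k) Hk) as [N HN].
  specialize (HN (max N k) ltac:(lia)).
  assert (f k <= sum_f_R0 f (max N k)) by (apply sum_ge_term; auto; lia).
  unfold Rdist in HN. rewrite Rminus_0_r in HN. rewrite Rabs_pos_eq in HN by lra. lra. Qed.

Lemma sum_f_sumN f n : sum_f_R0 f n = sumN (S n) f.
Proof. induction n; simpl; [lra|]. simpl in IHn. rewrite IHn. reflexivity. Qed.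

Lemma sumN_tail f N M : (N <= M)%nat -> (forall i, (N <= i)%nat -> f i = 0) -> sumN M f = sumN N f.
Proof. intros H Hz. induction M; [replace N with O by lia; auto|].
  destruct (Nat.eq_dec N (S M)) as [->|]; auto. simpl. rewrite IHM by lia. rewrite Hz by lia. ring. Qed.

Lemma isum_finite f N : (forall i, (N <= i)%nat -> f i = 0) -> infinite_sum f (sumN N f).
Proof. intros Hz eps He. exists N. intros n Hn. rewrite sum_f_sumN, (sumN_tail f N) by (auto; lia).
  unfold Rdist; rewrite Rminus_diag, Rabs_R0; lra. Qed.

Lemma isum_const0 : infinite_sum (fun _ => 0) 0.
Proof. apply (isum_finite (fun _ => 0) O); auto. Qed.

Lemma isum_scal f l c : infinite_sum f l -> infinite_sum (fun k => f k * c) (l * c).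
Proof. intros H. apply (Un_cv_ext (fun n => sum_f_R0 f n * c)).
  - intros n. rewrite Rmult_comm, scal_sum. reflexivity.
  - apply CV_mult; auto. intros eps He; exists O; intros; unfold Rdist; rewrite Rminus_diag, Rabs_R0; lra.
Qed.

Lemma isum_sumN M (h : nat -> nat -> R) (t : nat -> R) :
  (forall i, (i < M)%nat -> infinite_sum (h i) (t i)) ->
  infinite_sum (fun k => sumN M (fun i => h i k)) (sumN M t).
Proof. induction M; intros H; simpl.
  - apply isum_const0.
  - apply (Un_cv_ext (fun n => sum_f_R0 (fun k => sumN M (fun i => h i k)) n + sum_f_R0 (h M) n)).
    + intros n. rewrite <- sum_plus. reflexivity.
    + apply CV_plus; [apply IHM; intros; apply H; lia|apply H; lia].
Qed.

Lemma tail_small p tau : 0 < tau -> (forall a, 0 <= p a) -> infinite_sum p 1 ->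
  exists N, forall i, (N <= i)%nat -> p i < tau.
Proof. intros Ht Hp Hs. destruct (Hs (tau/2) ltac:(lra)) as [N0 HN].
  exists (S N0). intros i Hi. destruct i as [|k]; [lia|].
  assert (H1 := HN k ltac:(lia)). assert (H2 := HN (S k) ltac:(lia)).
  simpl in H2. unfold Rdist in *. absr. Qed.

Lemma dist_le1 p : distribution p -> forall i, p i <= 1.
Proof. intros [Hp Hs] i.
  apply Rle_cv_lim with (Un := fun _ => p i) (Vn := fun n => sum_f_R0 p (n + i)).
  - intros n. apply sum_ge_term; auto; lia.
  - intros eps He; exists O; intros; unfold Rdist; rewrite Rminus_diag, Rabs_R0; lra.
  - apply CV_shift'. exact Hs.
Qed.

Section Marg.
Variables (p : nat -> R) (N : nat) (tau : R) (G : R -> R).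
Hypotheses (Ht : 0 < tau) (Htail : forall i, (N <= i)%nat -> p i < tau) (Hle1 : forall i, p i <= 1)
  (HG0 : G tau = 0).

Definition fb x := fun j => if Req_EM_T (p j) x then true else false.
Definition cntv x := length (filter (fb x) (seq 0 N)).

Lemma count_sum x c : sumN N (fun i => if Req_EM_T (p i) x then c else 0) = INR (cntv x) * c.
Proof. unfold cntv. clear Htail. induction N as [|M IH]; [simpl; lra|].
  rewrite seq_S, filter_app, length_app, plus_INR. cbn [sumN]. rewrite IH. simpl.
  destruct (Req_EM_T (p M) x); unfold fb; destruct (Req_dec_T (p M) x); simpl; try lra; congruence. Qed.

Lemma hist_cnt x : tau < x -> hist p x (cntv x).
Proof. intros Hx. exists (filter (fb x) (seq 0 N)). split; [apply NoDup_filter, seq_NoDup|split; auto].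
  intros a. rewrite filter_In, in_seq. unfold fb. split.
  - intros [_ H]. destruct (Req_EM_T (p a) x); auto; discriminate.
  - intros H. destruct (Nat.lt_ge_cases a N) as [Ha|Ha].
    + split; [lia|]. destruct (Req_EM_T (p a) x); auto.
    + specialize (Htail a Ha). lra.
Qed.

Lemma cnt_pos' j x : (j < N)%nat -> p j = x -> (0 < INR (cntv x)).
Proof. intros Hj Hpj. apply lt_0_INR. unfold cntv.
  assert (In j (filter (fb x) (seq 0 N))).
  { apply filter_In; split; [apply in_seq; lia|]. unfold fb; destruct (Req_EM_T (p j) x); auto. }
  destruct (filter (fb x) (seq 0 N)); [destruct H|simpl; lia]. Qed.

Lemma marg (sx w : nat -> R) :
  (forall k, 0 <= w k /\ 0 < sx k <= 1) ->
  (forall x n, 0 < x <= 1 -> hist p x n ->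
     infinite_sum (fun k => if Req_EM_T (sx k) x then w k else 0) (x * INR n)) ->
  infinite_sum (fun k => w k * G (Rmax (sx k) tau))
     (sumN N (fun i => Rmax (p i) tau * G (Rmax (p i) tau))).
Proof. intros Hw Hm.
  set (h := fun i k => if Rlt_dec tau (p i) then
         (if Req_EM_T (sx k) (p i) then w k else 0) * (G (p i) / INR (cntv (p i))) else 0).
  apply (Un_cv_ext (sum_f_R0 (fun k => sumN N (fun i => h i k)))).
  - intros n. apply sum_eq. intros k _. destruct (Hw k) as [Hwk Hsk].
    destruct (Rle_dec (sx k) tau) as [Hs|Hs].
    + rewrite Rmax_right, HG0 by auto. rewrite Rmult_0_r. apply sumN_zero. intros i Hi.
      unfold h. destruct (Rlt_dec tau (p i)); auto. destruct (Req_EM_T (sx k) (p i)); [lra|ring].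
    + destruct (Req_dec (w k) 0) as [Hw0|Hw0].
      { rewrite Hw0, Rmult_0_l. apply sumN_zero. intros i Hi. unfold h.
        destruct (Rlt_dec tau (p i)); auto. destruct (Req_EM_T (sx k) (p i)); rewrite ?Hw0; ring. }
      assert (Hex : exists j, (j < N)%nat /\ p j = sx k).
      { apply NNPP; intros Hne.
        assert (Hh : hist p (sx k) 0).
        { exists nil. split; [constructor|split; auto]. intros a; split; [intros []|intros Ha].
          destruct (Nat.lt_ge_cases a N) as [Ha'|Ha']; [apply Hne; eauto|].
          specialize (Htail a Ha'). lra. }
        specialize (Hm (sx k) O Hsk Hh). rewrite Rmult_0_r in Hm.
        apply (isum_zero_pos _ k) in Hm; auto.
        - intros i; destruct (Req_EM_T (sx i) (sx k)); [apply Hw|lra].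
        - destruct (Req_EM_T (sx k) (sx k)); [lra|congruence]. }
      destruct Hex as [j [Hj Hpj]].
      assert (Hc := cnt_pos' j (sx k) Hj Hpj).
      rewrite (sumN_ext N _ (fun i => if Req_EM_T (p i) (sx k) then w k * (G (sx k) / INR (cntv (sx k))) else 0)).
      * rewrite count_sum, Rmax_left by lra. field. lra.
      * intros i Hi. unfold h. destruct (Req_EM_T (p i) (sx k)) as [Heq|Hne].
        -- rewrite Heq. destruct (Rlt_dec tau (sx k)); [|lra].
           destruct (Req_EM_T (sx k) (sx k)); [ring|congruence].
        -- destruct (Rlt_dec tau (p i)); auto. destruct (Req_EM_T (sx k) (p i)); [congruence|ring].
  - apply isum_sumN. intros i Hi. unfold h. destruct (Rlt_dec tau (p i)) as [Hlt|Hlt].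
    + rewrite Rmax_left by lra.
      replace (p i * G (p i)) with ((p i * INR (cntv (p i))) * (G (p i) / INR (cntv (p i)))).
      * apply isum_scal. apply Hm; [split; [lra|apply Hle1]|apply hist_cnt; auto].
      * assert (0 < INR (cntv (p i))) by (apply (cnt_pos' i); auto). field. lra.
    + rewrite Rmax_right, HG0, Rmult_0_r by lra. apply isum_const0.
Qed.
End Marg.

Lemma dual p1 p2 N tau G sx sy w c : 0 < tau ->
  (forall i, (N <= i)%nat -> p1 i < tau) -> (forall i, (N <= i)%nat -> p2 i < tau) ->
  (forall i, p1 i <= 1) -> (forall i, p2 i <= 1) -> G tau = 0 -> Lip G tau ->
  scheme_ok p1 p2 sx sy w -> scheme_cost tau sx sy w c ->
  sumN N (fun i => Rmax (p1 i) tau * G (Rmax (p1 i) tau)) -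
  sumN N (fun i => Rmax (p2 i) tau * G (Rmax (p2 i) tau)) <= c.
Proof. intros Ht T1 T2 L1 L2 HG0 HL [Hw [H1 H2]] Hc.
  assert (M1 := marg p1 N tau G Ht T1 L1 HG0 sx w ltac:(intros k; destruct (Hw k) as [? [? ?]]; auto) H1).
  assert (M2 := marg p2 N tau G Ht T2 L2 HG0 sy w ltac:(intros k; destruct (Hw k) as [? [? ?]]; auto) H2).
  apply Rle_cv_lim with
    (Un := sum_f_R0 (fun k => w k * G (Rmax (sx k) tau) - w k * G (Rmax (sy k) tau)))
    (Vn := sum_f_R0 (fun k => w k * move_cost tau (sx k) (sy k))).
  - intros n. apply sum_Rle. intros k _. destruct (Hw k) as [Hwk _].
    rewrite <- Rmult_minus_distr_l. apply Rmult_le_compat_l; auto.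
    unfold move_cost. eapply Rle_trans; [apply Rle_abs|]. apply HL; apply Rmax_r.
  - apply (Un_cv_ext (fun n => sum_f_R0 (fun k => w k * G (Rmax (sx k) tau)) n -
                              sum_f_R0 (fun k => w k * G (Rmax (sy k) tau)) n)).
    + intros n; rewrite minus_sum; reflexivity.
    + apply CV_minus; auto.
  - exact Hc.
Qed.

Theorem fact1 (tau eps : R) (p1 p2 : nat -> R) :
  0 < tau <= 1 ->
  distribution p1 -> distribution p2 ->
  inf_many_zeros p1 -> inf_many_zeros p2 ->
  R_tau_le tau p1 p2 eps ->
  exists pi : nat -> nat, Bijective pi /\
    exists S : R,
      infinite_sum (fun i => Rabs (Rmax (p1 i) tau - Rmax (p2 (pi i)) tau)) S /\
      S <= 2 * eps.
Proof.
  intros [Ht Ht1] D1 D2 _ _ HR.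
  assert (L1 := dist_le1 p1 D1). assert (L2 := dist_le1 p2 D2).
  destruct D1 as [Hp1 Hs1], D2 as [Hp2 Hs2].
  destruct (tail_small p1 tau Ht Hp1 Hs1) as [N1 T1].
  destruct (tail_small p2 tau Ht Hp2 Hs2) as [N2 T2].
  set (N := max N1 N2).
  assert (T1' : forall i, (N <= i)%nat -> p1 i < tau) by (intros; apply T1; lia).
  assert (T2' : forall i, (N <= i)%nat -> p2 i < tau) by (intros; apply T2; lia).
  destruct (sort_perm N p1 p2) as [s [Hperm [Hmono Hsum]]].
  destruct (core_level N p1 (fun i => p2 (s i)) Hmono _ tau Ht (le_n _)) as [G [HG0 [HL Hin]]].
  exists s. split; [exact (proj1 Hperm)|].
  exists (Cf N p1 (fun i => p2 (s i)) tau). split.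
  - apply isum_finite. intros i Hi. rewrite (proj2 Hperm i Hi).
    rewrite !Rmax_right by (try apply Rlt_le; auto).
    rewrite Rminus_diag. apply Rabs_R0.
  - assert (HF : FF N p1 (fun i => p2 (s i)) G tau =
       sumN N (fun i => Rmax (p1 i) tau * G (Rmax (p1 i) tau)) -
       sumN N (fun i => Rmax (p2 i) tau * G (Rmax (p2 i) tau))).
    { unfold FF. rewrite sumN_minus.
      rewrite (Hsum (fun j => Rmax (p2 j) tau * G (Rmax (p2 j) tau))). reflexivity. }
    assert (Hle : FF N p1 (fun i => p2 (s i)) G tau <= eps).
    { apply Rnot_lt_le. intros Hlt.
      set (d := (FF N p1 (fun i => p2 (s i)) G tau - eps) / 2).
      destruct (HR d ltac:(unfold d; lra)) as [sx [sy [w [c [Hok [Hc Hce]]]]]].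
      assert (Hd := dual p1 p2 N tau G sx sy w c Ht T1' T2' L1 L2 HG0 HL Hok Hc).
      rewrite <- HF in Hd. unfold d in Hce. lra. }
    assert (0 <= Rabs (Sf N p1 (fun i => p2 (s i)) tau)) by apply Rabs_pos.
    lra.
Qed.
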